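(* Let $f$, $u_0$, $L_f$, $V$, $\pi$, $L_v$, $L_\pi$ be as follows: $f:\mathcal{X}\times\mathcal{U}\to\mathcal{X}$ is Lipschitz with constant $L_f$ (i.e. $\|f(x,u)-f(x',u')\|_\infty\le L_f\|(x-x',u-u')\|_\infty$), $f(0,u_0)=0$, and $V:\mathcal{X}\to\mathbb{R}$, $\pi:\mathcal{X}\to\mathcal{U}$ are Lipschitz (w.r.t. $\|\cdot\|_\infty$) with constants $L_v,L_\pi$. Let $\mathcal{R}\subseteq\mathcal{X}$ be compact, $c_1\ge0$, and $c_2=\max\{L_v,1\}L_f\max\{1,L_\pi+c_1\}$. Let $\eta>0$ with $\mathcal{B}(0,\eta)\subset\mathcal{R}$, and assume $V(x)>0$ for all $x\in\mathcal{R}$ with $\|x\|_\infty\ge\eta$. Then there exists $\bar\epsilon>0$ such that for every $\epsilon\in(0,\bar\epsilon]$ the following holds: if $(V,\pi)$ is $\epsilon$-stable within $\mathcal{R}$, $\mathcal{D}(\mathcal{R},\rho)$ is an $\mathcal{R}$-invariant sublevel set with $\mathcal{B}(0,\epsilon)\subset\mathcal{D}(\mathcal{R},\rho)$, $\|\pi(0)-u_0\|_\infty\le c_1\epsilon$, $c_2\epsilon<\rho$ and $\mathcal{B}(0,c_2\epsilon)\subset\mathcal{R}$, then for every $x_0\in\mathcal{D}(\mathcal{R},\rho)\setminus\mathcal{B}(0,\epsilon)$ the sequence $x_{k+1}=f(x_k,\pi(x_k))$ satisfies $\|x_k\|_\infty\le\eta$ for all $k\ge K$, for some finite $K$.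
   Context: All norms are $\|\cdot\|_\infty$. $\mathcal{B}(0,\epsilon)=\{x:\|x\|_\infty<\epsilon\}$. The pair $(V,\pi)$ is called $\epsilon$-stable within a region $\mathcal{R}$ if: (a) $V(0)=0$; (b) there exists $\zeta>0$ such that $V(f(x,\pi(x)))-V(x)<-\zeta$ for all $x\in\mathcal{R}\setminus\mathcal{B}(0,\epsilon)$; (c) $V(x)>0$ for all $x\in\mathcal{R}\setminus\mathcal{B}(0,\epsilon)$. For $\rho\in\mathbb{R}$, $\mathcal{D}(\mathcal{R},\rho)=\{x\in\mathcal{R}: V(x)\le\rho\}$; it is called an $\mathcal{R}$-invariant sublevel set if $x\in\mathcal{D}(\mathcal{R},\rho)$ implies $f(x,\pi(x))\in\mathcal{R}$. *)

(* Defs.v *)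
From HB Require Import structures.
From mathcomp Require Import all_boot all_order all_algebra.
From mathcomp Require Import all_classical all_reals all_analysis.
Set Implicit Arguments. Unset Strict Implicit. Unset Printing Implicit Defensive.
Import Order.TTheory GRing.Theory Num.Theory.
Import numFieldNormedType.Exports.
Local Open Scope classical_set_scope.
Local Open Scope ring_scope.

(* State space X = R^n and input space U = R^m as row vectors 'rV[R]_n;
   the MathComp-Analysis norm `|x| on matrices is the sup norm
   (mx_norm x = max_i |x_i|), i.e. ||.||_infty. *)

(* Lipschitz w.r.t. ||.||_infty on X x U: ||(x-x',u-u')||_infty = max(...) *)
Definition lipschitz2 {R : realType} {n m : nat}
  (f : 'rV[R]_n -> 'rV[R]_m -> 'rV[R]_n) (L : R) :=
  forall x x' u u', `|f x u - f x' u'| <= L * Num.max `|x - x'| `|u - u'|.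

Definition lipschitz1 {R : realType} {n p : nat}
  (g : 'rV[R]_n -> 'rV[R]_p) (L : R) :=
  forall x x', `|g x - g x'| <= L * `|x - x'|.

Definition lipschitzR {R : realType} {n : nat} (V : 'rV[R]_n -> R) (L : R) :=
  forall x x', `|V x - V x'| <= L * `|x - x'|.

Definition eps_stable {R : realType} {n m : nat}
  (f : 'rV[R]_n -> 'rV[R]_m -> 'rV[R]_n) (V : 'rV[R]_n -> R)
  (pi : 'rV[R]_n -> 'rV[R]_m) (Rg : set 'rV[R]_n) (eps : R) :=
  V 0 = 0 /\
  (exists zeta : R, 0 < zeta /\
     forall x, Rg x -> ~ (`|x| < eps) -> V (f x (pi x)) - V x < - zeta) /\
  (forall x, Rg x -> ~ (`|x| < eps) -> 0 < V x).

Definition sublevel {R : realType} {n : nat} (V : 'rV[R]_n -> R)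
  (Rg : set 'rV[R]_n) (rho : R) : set 'rV[R]_n :=
  [set x | Rg x /\ V x <= rho].

Definition invariant_sublevel {R : realType} {n m : nat}
  (f : 'rV[R]_n -> 'rV[R]_m -> 'rV[R]_n) (V : 'rV[R]_n -> R)
  (pi : 'rV[R]_n -> 'rV[R]_m) (Rg : set 'rV[R]_n) (rho : R) :=
  forall x, sublevel V Rg rho x -> Rg (f x (pi x)).

Definition Binf {R : realType} {n : nat} (r : R) : set 'rV[R]_n :=
  [set x | `|x| < r].

(* Main.v *)
Require Import Defs.
From HB Require Import structures.
From mathcomp Require Import all_boot all_order all_algebra.
From mathcomp Require Import all_classical all_reals all_analysis.
Import Order.TTheory GRing.Theory Num.Theory.
Import numFieldNormedType.Exports.
Local Open Scope classical_set_scope.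
Local Open Scope ring_scope.
Lemma lipR_cont (R : realType) n (V : 'rV[R]_n -> R) L :
  lipschitzR V L -> continuous V.
Proof.
move=> hL x.
have FF : ProperFilter (nbhs x) by exact: nbhs_pfilter.
apply/cvgrPdist_lt => e e0.
have d0 : 0 < e / (`|L| + 1) by apply: divr_gt0 => //; rewrite ltr_wpDl.
near=> y.
have hy : `|x - y| < e / (`|L| + 1).
  near: y. by move/fcvgrPdist_lt: (@cvg_id _ (nbhs x)) => /(_ _ d0).
apply: (le_lt_trans (hL x y)).
apply: (le_lt_trans (ler_norm _)) ; rewrite normrM.
have h1 : `|L| * `|x - y| <= `|L| * (e / (`|L| + 1)).
  by rewrite ler_wpM2l // ltW // normr_id.
rewrite normr_id; apply: (le_lt_trans h1).
rewrite mulrCA gtr_pMr // ltr_pdivrMr ?ltr_wpDl // mul1r ltrDl //.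
Unshelve. all: by end_near.
Qed.
Lemma minV (R : realType) n (V : 'rV[R]_n -> R) L (Rg : set 'rV[R]_n) eta :
  lipschitzR V L -> compact Rg ->
  (forall x, Rg x -> eta <= `|x| -> 0 < V x) ->
  exists m, 0 < m /\ forall x, Rg x -> eta <= `|x| -> m <= V x.
Proof.
move=> hL cR hpos.
set S := Rg `&` [set x | eta <= `|x|].
have cS : compact S.
  apply: compact_closedI => //.
  have := @preimage_closed _ R (@Num.norm _ 'rV[R]_n) [set r | eta <= r].
  apply; last exact: closed_ge.
  by move=> ? _; exact: norm_continuous.
have [[c Sc]|S0] := pselect (S !=set0).
  have [d /set_mem Sd hd] := EVT_min_rV (ex_intro _ c Sc) cS
     (@continuous_subspaceT _ _ _ _ (@lipR_cont _ _ _ _ hL)).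
  exists (V d); split; first by case: Sd => ? ?; apply: hpos.
  by move=> x Rx ex; apply: hd; rewrite inE.
exists 1; split => // x Rx ex; exfalso; apply: S0; by exists x.
Qed.

Lemma rV0_norm (R : realType) (v : 'rV[R]_0) : `|v| = 0.
Proof. by rewrite thinmx0 normr0. Qed.

Lemma lip_nonneg (R : realType) n p (g : 'rV[R]_n.+1 -> 'rV[R]_p) L :
  (forall x, `|g x - g 0| <= L * `|x|) -> 0 <= L.
Proof.
move=> h.
set x : 'rV[R]_n.+1 := const_mx 1.
have x0 : 0 < `|x|.
  rewrite normr_gt0; apply/eqP => /matrixP /(_ 0 0); rewrite !mxE => /eqP.
  by rewrite oner_eq0.
have := le_trans (normr_ge0 _) (h x).
by rewrite pmulr_lge0.
Qed.
From mathcomp Require Import lra.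

Theorem theorem1 (R : realType) (n m : nat)
  (f : 'rV[R]_n -> 'rV[R]_m -> 'rV[R]_n) (u0 : 'rV[R]_m)
  (V : 'rV[R]_n -> R) (pi : 'rV[R]_n -> 'rV[R]_m) (Lf Lv Lpi : R)
  (Rg : set 'rV[R]_n) (c1 eta : R) :
  lipschitz2 f Lf -> f 0 u0 = 0 ->
  lipschitzR V Lv -> lipschitz1 pi Lpi ->
  compact Rg -> 0 <= c1 ->
  0 < eta -> Binf eta `<=` Rg ->
  (forall x, Rg x -> eta <= `|x| -> 0 < V x) ->
  let c2 := Num.max Lv 1 * Lf * Num.max 1 (Lpi + c1) in
  exists epsbar : R, 0 < epsbar /\
    forall eps : R, 0 < eps -> eps <= epsbar ->
    forall rho : R,
      eps_stable f V pi Rg eps ->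
      invariant_sublevel f V pi Rg rho ->
      Binf eps `<=` sublevel V Rg rho ->
      `|pi 0 - u0| <= c1 * eps ->
      c2 * eps < rho ->
      Binf (c2 * eps) `<=` Rg ->
      forall x0, sublevel V Rg rho x0 -> ~ (`|x0| < eps) ->
      exists K : nat, forall k : nat, (K <= k)%N ->
        `|iter k (fun x => f x (pi x)) x0| <= eta.
Proof.
move=> hf f0 hV hpi cR c10 eta0 Beta hpos c2.
have [mm [mm0 hmm]] := @minV _ _ _ _ _ _ hV cR hpos.
exists (Num.min eta (mm / (`|c2| + 1))).
split; first by rewrite lt_min eta0 divr_gt0 // ltr_wpDl.
move=> eps eps0; rewrite le_min => /andP [epseta epsmm].
move=> rho [V00 [[zeta [zeta0 hdec]] hposV]] hinv hBD hpi0 hc2 hBR x0 [Rx0 Vx0] nx0.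
destruct n as [|n].
  by exists 0%N => k _; rewrite rV0_norm ltW.
have Lf0 : 0 <= Lf.
  apply: (@lip_nonneg _ _ _ (fun x => f x 0)) => x.
  by have := hf x 0 0 0; rewrite subr0 subrr normr0 max_l.
have Lpi0 : 0 <= Lpi.
  by apply: (@lip_nonneg _ _ _ pi) => x; have := hpi x 0; rewrite subr0.
set F := fun x => f x (pi x).
set a := Lf * Num.max 1 (Lpi + c1).
have c2a : c2 = Num.max Lv 1 * a by rewrite /c2 /a mulrA.
have a0 : 0 <= a by rewrite /a mulr_ge0 // le_max ler01.
have stepA : forall x, `|x| < eps -> `|F x| <= a * eps.
  move=> x hx.
  have h1 := hf x 0 (pi x) u0.
  rewrite f0 !subr0 in h1.
  have h2 : `|pi x - u0| <= (Lpi + c1) * eps.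
    have : pi x - u0 = (pi x - pi 0) + (pi 0 - u0) by rewrite addrA subrK.
    move=> ->; apply: (le_trans (ler_normD _ _)).
    have := hpi x 0; rewrite subr0 => h3.
    have h4 : Lpi * `|x| <= Lpi * eps by rewrite ler_wpM2l // ltW.
    rewrite mulrDl; apply: lerD => //; exact: le_trans h3 h4.
  apply: (le_trans h1); rewrite /a -mulrA ler_wpM2l //.
  rewrite ge_max; apply/andP; split.
    apply: (le_trans (ltW hx)); apply: ler_peMl; [exact: ltW | by rewrite le_max lexx].
  apply: (le_trans h2); apply: ler_wpM2r; [exact: ltW | by rewrite le_max lexx orbT].
have VFle : forall y, V y <= Num.max Lv 1 * `|y|.
  move=> y; have := hV y 0; rewrite V00 subr0 subr0 => h.
  apply: (le_trans (ler_norm _)); apply: (le_trans h).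
  by rewrite ler_wpM2r // le_max lexx.
pose P x := `|x| < eps \/ (Rg x /\ V x <= c2 * eps).
have stepB : forall x, P x -> P (F x).
  move=> x Px.
  have [hx|hx] := pselect (`|x| < eps).
    have [hF|hF] := pselect (`|F x| < eps); first by left.
    right; split; first by apply: hinv; apply: hBD.
    apply: (le_trans (VFle _)); rewrite c2a -mulrA ler_wpM2l ?stepA //.
    by rewrite le_max ler01 orbT.
  case: Px => [//|[Rx Vx]].
  right; split.
    apply: hinv; split => //; apply: (le_trans Vx); exact: ltW.
  have := hdec x Rx hx; rewrite -/F; lra.
have stepC : forall x, P x -> `|x| <= eta.
  move=> x [hx|[Rx Vx]]; first by apply: (le_trans (ltW hx)).
  rewrite leNgt; apply/negP => hx.
  have := hmm x Rx (ltW hx) => h.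
  have h1 : c2 * eps <= `|c2| * (mm / (`|c2| + 1)).
    apply: (le_trans (ler_wpM2r (ltW eps0) (ler_norm c2))).
    by rewrite ler_wpM2l.
  have h2 : `|c2| * (mm / (`|c2| + 1)) < mm.
    rewrite mulrCA gtr_pMr // ltr_pdivrMr ?ltr_wpDl // mul1r ltrDl //.
  by move: (le_lt_trans (le_trans Vx h1) h2); rewrite ltNge h.
have [K HK] : exists K, `|iter K F x0| < eps.
  apply: contrapT => hno.
  have hall : forall k, sublevel V Rg rho (iter k F x0) /\
      V (iter k F x0) <= V x0 - k%:R * zeta.
    elim=> [|k [[Rk Vk] Vk2]] /=; first by rewrite mul0r subr0.
    have nk : ~ `|iter k F x0| < eps by move=> h; apply: hno; exists k.
    have := hdec _ Rk nk; rewrite -/F => hd.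
    split; first split.
    - by apply: hinv.
    - lra.
    - rewrite -natr1 mulrDl mul1r; lra.
  have rz0 : 0 <= rho / zeta.
    apply: divr_ge0; last exact: ltW.
    by apply: (le_trans _ Vx0); apply: ltW; apply: hposV.
  have hk := archi_boundP rz0.
  set k := Num.Def.archi_bound _ in hk.
  have [[Rk _] Vk] := hall k.
  have nk : ~ `|iter k F x0| < eps by move=> h; apply: hno; exists k.
  have := hposV _ Rk nk.
  rewrite ltr_pdivrMr // in hk.
  lra.
exists K => k hk.
rewrite -(subnK hk) iterD.
apply: stepC.
elim: (k - K)%N => [|j IH] /=; first by left.
exact: stepB.
Qed.
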